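(* Let $a>0$, $b>0$, $c>0$ and suppose that $$\Phi(x)={}_1F_2\left(a\,;b,c\,;-\frac{x^2}{4}\right)\ge 0\quad\text{for all } x\in\mathbb{R}.$$ Then for any $\gamma,\delta,\epsilon$ with $0\le\gamma<a$, $\delta\ge0$, $\epsilon\ge0$, not all three equal to zero, we have $(a-\gamma,\,b+\delta,\,c+\epsilon)\in\mathcal{P}_{1,2}$.
   Context: For $a,b,c>0$, ${}_1F_2\left(a\,;b,c\,;-\frac{x^2}{4}\right)=\sum_{k=0}^\infty \frac{(a)_k}{k!\,(b)_k(c)_k}\left(-\frac{x^2}{4}\right)^k$, where $(\alpha)_k=\Gamma(\alpha+k)/\Gamma(\alpha)$. $\mathcal{P}_{1,2}$ denotes the set of all triples $(a,b,c)$ of positive reals such that ${}_1F_2\left(a\,;b,c\,;-\frac{x^2}{4}\right)>0$ for all $x>0$. *)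

(* Defs.v *)
From Stdlib Require Import Reals Arith Factorial.
From Coquelicot Require Import Coquelicot.
Open Scope R_scope.

Fixpoint poch (a : R) (k : nat) : R :=
  match k with
  | O => 1
  | S k' => poch a k' * (a + INR k')
  end.

Definition F12_term (a b c z : R) (k : nat) : R :=
  poch a k / (INR (Factorial.fact k) * poch b k * poch c k) * z ^ k.

(* 1F2(a; b, c; z) as the sum of its (everywhere absolutely convergent for
   b,c > 0) power series. *)
Definition F12 (a b c z : R) : R := Series (F12_term a b c z).

Definition P12 (a b c : R) : Prop :=
  0 < a /\ 0 < b /\ 0 < c /\
  forall x : R, 0 < x -> 0 < F12 a b c (- x ^ 2 / 4).

(* Main.v *)
Require Import Defs.
From Stdlib Require Import Reals Lra Lia Arith Factorial.
From Coquelicot Require Import Coquelicot.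
Open Scope R_scope.

Lemma exp_le' x y : x <= y -> exp x <= exp y.
Proof. intros [H|H]; [left; apply exp_increasing; auto | subst; lra]. Qed.

Definition w (p q t : R) : R := exp ((p-1) * ln t + (q-1) * ln (1-t)).

Lemma w_pos p q t : 0 < w p q t.
Proof. apply exp_pos. Qed.

Definition hk (p q : R) (k : nat) (t : R) := t ^ (S k) * (1 - t) * w p q t.
Definition dk (p q : R) (k : nat) (t : R) := t ^ k * w p q t * ((INR k + p) - (INR k + p + q) * t).

Lemma hk_deriv p q k t : 0 < t < 1 -> is_derive (hk p q k) t (dk p q k t).
Proof.
  intros Ht. unfold hk, dk, w.
  auto_derive.
  - lra.
  - replace (match k with | 0%nat => 1 | S _ => INR k + 1 end) with (INR k + 1)
      by (destruct k; simpl; lra).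
    replace (1 + - t) with (1 - t) by ring.
    set (E := exp _). set (T := t ^ k).
    field. lra.
Qed.

Lemma mon_cont p q k t : 0 < t < 1 -> continuous (fun t => t ^ k * w p q t) t.
Proof. intros Ht. apply (@ex_derive_continuous R_AbsRing R_NormedModule). unfold w. auto_derive. lra. Qed.

Lemma dk_cont p q k t : 0 < t < 1 -> continuous (dk p q k) t.
Proof. intros Ht. apply (@ex_derive_continuous R_AbsRing R_NormedModule). unfold dk, w. auto_derive. lra. Qed.

Definition J p q k eps := RInt (fun t => t ^ k * w p q t) eps (1 - eps).

Lemma mon_ex p q k eps : 0 < eps < 1/2 -> ex_RInt (fun t => t ^ k * w p q t) eps (1 - eps).
Proof.
  intros He. apply (@ex_RInt_continuous R_CompleteNormedModule). intros z Hz.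
  rewrite Rmin_left in Hz by lra. rewrite Rmax_right in Hz by lra.
  apply mon_cont. lra.
Qed.

Lemma J_rec p q k eps : 0 < eps < 1/2 ->
  (INR k + p) * J p q k eps - (INR k + p + q) * J p q (S k) eps
  = hk p q k (1 - eps) - hk p q k eps.
Proof.
  intros He.
  assert (H1 : is_RInt (dk p q k) eps (1 - eps) (minus (hk p q k (1 - eps)) (hk p q k eps))).
  { apply (@is_RInt_derive R_CompleteNormedModule).
    - intros x Hx. rewrite Rmin_left in Hx by lra. rewrite Rmax_right in Hx by lra.
      apply hk_deriv. lra.
    - intros x Hx. rewrite Rmin_left in Hx by lra. rewrite Rmax_right in Hx by lra.
      apply dk_cont. lra. }
  apply (@is_RInt_unique R_CompleteNormedModule) in H1. unfold minus, plus, opp in H1; simpl in H1.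
  replace (hk p q k (1 - eps) - hk p q k eps) with (RInt (dk p q k) eps (1-eps)) by (rewrite H1; reflexivity).
  unfold J.
  rewrite <- (@RInt_scal R_CompleteNormedModule (fun t => t ^ k * w p q t)) by (apply mon_ex; lra).
  rewrite <- (@RInt_scal R_CompleteNormedModule (fun t => t ^ (S k) * w p q t)) by (apply mon_ex; lra).
  rewrite <- (@RInt_minus R_CompleteNormedModule).
  - apply RInt_ext. intros x _. unfold dk, minus, plus, opp, scal; simpl.
    unfold mult; simpl. ring.
  - apply (@ex_RInt_scal R_CompleteNormedModule). apply mon_ex; lra.
  - apply (@ex_RInt_scal R_CompleteNormedModule). apply mon_ex; lra.
Qed.

Lemma hk_exp p q k t : 0 < t < 1 -> hk p q k t = exp ((INR k + p) * ln t + q * ln (1 - t)).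
Proof.
  intros Ht. unfold hk, w.
  rewrite <- (Rpower_pow (S k) t) by lra. unfold Rpower.
  rewrite <- (exp_ln (1 - t)) at 1 by lra.
  rewrite <- !exp_plus. f_equal. rewrite S_INR. ring.
Qed.

Lemma hk_bound0 p q k eps : 0 <= p -> 0 <= q -> 0 < eps < 1/2 ->
  0 <= hk p q k eps <= exp (p * ln eps).
Proof.
  intros Hp Hq He. rewrite hk_exp by lra. split; [left; apply exp_pos|].
  apply exp_le'.
  assert (ln eps < 0) by (rewrite <- ln_1; apply ln_increasing; lra).
  assert (ln (1 - eps) < 0) by (rewrite <- ln_1; apply ln_increasing; lra).
  pose proof (pos_INR k). nra.
Qed.

Lemma hk_bound1 p q k eps : 0 <= p -> 0 <= q -> 0 < eps < 1/2 ->
  0 <= hk p q k (1 - eps) <= exp (q * ln eps).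
Proof.
  intros Hp Hq He. rewrite hk_exp by lra. split; [left; apply exp_pos|].
  apply exp_le'. replace (1 - (1 - eps)) with eps by ring.
  assert (ln eps < 0) by (rewrite <- ln_1; apply ln_increasing; lra).
  assert (ln (1 - eps) < 0) by (rewrite <- ln_1; apply ln_increasing; lra).
  pose proof (pos_INR k). nra.
Qed.

Lemma poch_pos x k : 0 < x -> 0 < poch x k.
Proof.
  intros Hx. induction k as [|k IH]; simpl; [lra|].
  apply Rmult_lt_0_compat; auto. pose proof (pos_INR k); lra.
Qed.

Definition rr p q k := poch p k / poch (p + q) k.

Lemma rr_S p q k : 0 < p -> 0 <= q ->
  rr p q (S k) = rr p q k * ((INR k + p) / (INR k + p + q)).
Proof.
  intros Hp Hq. unfold rr. simpl.
  pose proof (poch_pos p k Hp). pose proof (poch_pos (p+q) k ltac:(lra)).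
  pose proof (pos_INR k).
  field. repeat split; lra.
Qed.

Lemma rr_bound p q k : 0 < p -> 0 <= q -> 0 < rr p q k <= 1.
Proof.
  intros Hp Hq. induction k as [|k IH].
  - unfold rr; simpl. lra.
  - rewrite rr_S by auto. pose proof (pos_INR k).
    assert (0 < (INR k + p) / (INR k + p + q) <= 1).
    { split. apply Rdiv_lt_0_compat; lra.
      apply Rmult_le_reg_r with (INR k + p + q); [lra|].
      unfold Rdiv. rewrite Rmult_assoc, Rinv_l by lra. lra. }
    split; [apply Rmult_lt_0_compat; lra|].
    nra.
Qed.

Lemma rr_0 p q : rr p q 0 = 1.
Proof. unfold rr; simpl; field. Qed.

Lemma D_bound p q k eps : 0 < p -> 0 < q -> 0 < eps < 1/2 ->
  Rabs (J p q k eps - rr p q k * J p q 0 eps)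
  <= INR k * (exp (p * ln eps) + exp (q * ln eps)) / (p + q).
Proof.
  intros Hp Hq He. set (B := exp (p * ln eps) + exp (q * ln eps)).
  induction k as [|k IH].
  - rewrite rr_0. simpl. replace (J p q 0 eps - 1 * J p q 0 eps) with 0 by ring.
    rewrite Rabs_R0. unfold Rdiv. rewrite !Rmult_0_l. lra.
  - pose proof (J_rec p q k eps He) as HR.
    pose proof (hk_bound0 p q k eps ltac:(lra) ltac:(lra) He).
    pose proof (hk_bound1 p q k eps ltac:(lra) ltac:(lra) He).
    set (bk := hk p q k (1 - eps) - hk p q k eps) in HR.
    assert (Hbk : Rabs bk <= B) by (unfold bk, B; apply Rabs_le; lra).
    pose proof (pos_INR k) as Hk.
    set (Dk := J p q k eps - rr p q k * J p q 0 eps) in IH.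
    assert (HD : J p q (S k) eps - rr p q (S k) * J p q 0 eps
                 = ((INR k + p) * Dk - bk) / (INR k + p + q)).
    { rewrite rr_S by lra. unfold Dk. rewrite <- HR. field. lra. }
    rewrite HD. rewrite S_INR.
    unfold Rdiv. rewrite Rabs_mult, (Rabs_right (/ _)) by (left; apply Rinv_0_lt_compat; lra).
    assert (H1 : Rabs ((INR k + p) * Dk - bk) <= (INR k + p) * (INR k * B / (p + q)) + B).
    { unfold Rminus. eapply Rle_trans; [apply Rabs_triang|]. rewrite Rabs_Ropp, Rabs_mult.
      rewrite (Rabs_right (INR k + p)) by lra.
      apply Rplus_le_compat; auto. apply Rmult_le_compat_l; lra. }
    assert (HB : 0 <= B) by (unfold B; pose proof (exp_pos (p * ln eps)); pose proof (exp_pos (q * ln eps)); lra).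
    apply Rle_trans with (((INR k + p) * (INR k * B / (p + q)) + B) * / (INR k + p + q)).
    { apply Rmult_le_compat_r; [left; apply Rinv_0_lt_compat; lra| auto]. }
    apply Rmult_le_reg_r with (INR k + p + q); [lra|].
    rewrite Rmult_assoc, Rinv_l by lra.
    apply Rmult_le_reg_r with (p + q); [lra|].
    unfold Rdiv. field_simplify; try lra. assert (0 <= INR k * B * q) by (apply Rmult_le_pos; [apply Rmult_le_pos|]; lra). assert (0 <= INR k * B) by (apply Rmult_le_pos; lra). lra.
Qed.

Lemma Series_nonneg (b : nat -> R) : (forall k, 0 <= b k) -> ex_series b -> 0 <= Series b.
Proof.
  intros Hb Hs.
  assert (E : Series (fun _ => 0) = 0).
  { rewrite (Series_ext _ (fun n => 0 * 0)) by (intros; ring).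
    rewrite Series_scal_l. ring. }
  rewrite <- E. apply Series_le; auto. intros n; split; [lra| auto].
Qed.

Lemma tail_bound (a b : nat -> R) n : (forall k, Rabs (a k) <= b k) -> ex_series b ->
  Rabs (Series a - sum_n a n) <= Series b - sum_n b n.
Proof.
  intros Hab Hb.
  assert (Ha : ex_series a) by (apply (ex_series_le a b); auto).
  rewrite (Series_incr_n a (S n)) by (auto; lia).
  rewrite (Series_incr_n b (S n)) by (auto; lia).
  simpl pred. rewrite !sum_n_Reals.
  replace (sum_f_R0 a n + Series (fun k => a (S n + k)%nat) - sum_f_R0 a n)
    with (Series (fun k => a (S n + k)%nat)) by ring.
  replace (sum_f_R0 b n + Series (fun k => b (S n + k)%nat) - sum_f_R0 b n)
    with (Series (fun k => b (S n + k)%nat)) by ring.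
  assert (Hbt : ex_series (fun k => b (S n + k)%nat)) by (apply ex_series_incr_n; auto).
  eapply Rle_trans; [apply Series_Rabs|].
  - apply (@ex_series_le R_AbsRing R_CompleteNormedModule _ (fun k => b (S n + k)%nat)); auto.
    intros k. unfold norm; simpl. unfold abs; simpl. rewrite Rabs_Rabsolu. apply Hab.
  - apply Series_le; auto. intros k; split; [apply Rabs_pos| apply Hab].
Qed.

Lemma term_le_Series (b : nat -> R) n : (forall k, 0 <= b k) -> ex_series b -> b n <= Series b.
Proof.
  intros Hb Hs.
  rewrite (Series_incr_n b (S n)) by (auto; lia). simpl pred.
  assert (0 <= Series (fun k => b (S n + k)%nat)).
  { apply Series_nonneg; auto. apply ex_series_incr_n; auto. }
  revert H. destruct n as [|n]; simpl; intros H; [lra|].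
  pose proof (cond_pos_sum b n Hb). lra.
Qed.

Definition good_conv (f : nat -> R) := forall x, ex_series (fun k => Rabs (f k * x ^ k)).

Lemma good_radius f : good_conv f -> forall x, Rbar_lt (Rabs x) (CV_radius f).
Proof.
  intros Hf x.
  apply Rbar_lt_le_trans with (Rabs x + 1); [simpl; lra|].
  destruct (CV_radius_bounded f) as [Hub _]. apply Hub.
  exists (Series (fun k => Rabs (f k * (Rabs x + 1) ^ k))).
  intros n. apply (term_le_Series (fun k => Rabs (f k * (Rabs x + 1) ^ k))); auto.
  intros; apply Rabs_pos.
Qed.

Lemma G_cont f p q z t : good_conv f -> 0 < t < 1 ->
  continuous (fun t => PSeries f (z * t) * w p q t) t.
Proof.
  intros Hf Ht. apply (@ex_derive_continuous R_AbsRing R_NormedModule).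
  unfold w. auto_derive. repeat split; try lra.
  apply ex_derive_PSeries. apply good_radius; auto.
Qed.

Lemma G_ex f p q z eps : good_conv f -> 0 < eps < 1/2 ->
  ex_RInt (fun t => PSeries f (z * t) * w p q t) eps (1 - eps).
Proof.
  intros Hf He. apply (@ex_RInt_continuous R_CompleteNormedModule). intros y Hy.
  rewrite Rmin_left in Hy by lra. rewrite Rmax_right in Hy by lra.
  apply G_cont; auto; lra.
Qed.

Lemma partial_RInt f p q z eps n : 0 < eps < 1/2 ->
  is_RInt (fun t => sum_n (fun k => f k * (z * t) ^ k) n * w p q t) eps (1 - eps)
    (sum_n (fun k => f k * z ^ k * J p q k eps) n).
Proof.
  intros He. induction n as [|n IH].
  - rewrite sum_O.
    eapply (@is_RInt_ext R_NormedModule); [|apply (@is_RInt_scal R_NormedModule), (@RInt_correct R_CompleteNormedModule), (mon_ex p q 0 eps He)].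
    intros x _. rewrite sum_O. unfold scal; simpl; unfold mult; simpl. ring.
  - rewrite sum_Sn.
    eapply (@is_RInt_ext R_NormedModule); [|apply (@is_RInt_plus R_NormedModule); [apply IH|apply (@is_RInt_scal R_NormedModule), (@RInt_correct R_CompleteNormedModule), (mon_ex p q (S n) eps He)]].
    intros x _. rewrite sum_Sn. unfold scal, plus; simpl; unfold mult, plus; simpl.
    rewrite Rpow_mult_distr. ring.
Qed.

Lemma interchange f p q z eps : good_conv f -> 0 < eps < 1/2 ->
  is_series (fun k => f k * z ^ k * J p q k eps)
    (RInt (fun t => PSeries f (z * t) * w p q t) eps (1 - eps)).
Proof.
  intros Hf He.
  set (I := RInt (fun t => PSeries f (z * t) * w p q t) eps (1 - eps)).
  set (b := fun k => Rabs (f k * Rabs z ^ k)).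
  set (T := fun n => Series b - sum_n b n).
  set (J0 := J p q 0 eps).
  assert (Hb : ex_series b) by apply Hf.
  assert (Hpt : forall n t, 0 <= t <= 1 ->
            Rabs (PSeries f (z * t) - sum_n (fun k => f k * (z * t) ^ k) n) <= T n).
  { intros n t Ht. unfold PSeries, T. apply tail_bound; auto.
    intros k. unfold b. rewrite !Rabs_mult, <- !RPow_abs, Rabs_Rabsolu.
    apply Rmult_le_compat_l; [apply Rabs_pos|]. apply pow_incr. split; [apply Rabs_pos|].
    rewrite Rabs_mult. rewrite (Rabs_right t) by lra.
    pose proof (Rabs_pos z). nra. }
  assert (Hbnd : forall n, Rabs (sum_n (fun k => f k * z ^ k * J p q k eps) n - I) <= T n * J0).
  { intros n.
    pose proof (partial_RInt f p q z eps n He) as HP.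
    set (Sn := sum_n (fun k => f k * z ^ k * J p q k eps) n) in *.
    set (Pn := fun t => sum_n (fun k => f k * (z * t) ^ k) n * w p q t) in *.
    assert (HexP : ex_RInt Pn eps (1 - eps)) by (exists Sn; exact HP).
    apply (@is_RInt_unique R_CompleteNormedModule) in HP.
    pose proof (G_ex f p q z eps Hf He) as HexG.
    assert (HexD : ex_RInt (fun t => minus (PSeries f (z * t) * w p q t) (Pn t)) eps (1 - eps))
      by (apply (@ex_RInt_minus R_NormedModule); auto).
    assert (HexT : ex_RInt (fun t => scal (T n) (t ^ 0 * w p q t)) eps (1 - eps))
      by (apply (@ex_RInt_scal R_NormedModule); apply mon_ex; auto).
    assert (HD : RInt (fun t => minus (PSeries f (z * t) * w p q t) (Pn t)) eps (1 - eps) = I - Sn).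
    { rewrite (@RInt_minus R_CompleteNormedModule) by auto. rewrite HP. reflexivity. }
    assert (HT : RInt (fun t => scal (T n) (t ^ 0 * w p q t)) eps (1 - eps) = T n * J0).
    { rewrite (@RInt_scal R_CompleteNormedModule) by (apply mon_ex; auto). reflexivity. }
    assert (HT' : RInt (fun t => opp (scal (T n) (t ^ 0 * w p q t))) eps (1 - eps) = - (T n * J0)).
    { rewrite (@RInt_opp R_CompleteNormedModule) by auto. rewrite HT. reflexivity. }
    assert (Hle1 : RInt (fun t => minus (PSeries f (z * t) * w p q t) (Pn t)) eps (1 - eps)
                   <= RInt (fun t => scal (T n) (t ^ 0 * w p q t)) eps (1 - eps)).
    { apply RInt_le; auto; try lra. intros t Ht. unfold minus, plus, opp, scal, Pn; simpl; unfold mult; simpl.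
      pose proof (Hpt n t ltac:(lra)) as Hq. apply Rabs_le_between in Hq. 
      pose proof (w_pos p q t). nra. }
    assert (Hle2 : RInt (fun t => opp (scal (T n) (t ^ 0 * w p q t))) eps (1 - eps)
                   <= RInt (fun t => minus (PSeries f (z * t) * w p q t) (Pn t)) eps (1 - eps)).
    { apply RInt_le; auto; try lra.
      - apply (@ex_RInt_opp R_NormedModule); auto.
      - intros t Ht. unfold minus, plus, opp, scal, Pn; simpl; unfold mult; simpl.
        pose proof (Hpt n t ltac:(lra)) as Hq. apply Rabs_le_between in Hq.
        pose proof (w_pos p q t). nra. }
    rewrite HD, HT in Hle1. rewrite HD, HT' in Hle2.
    apply Rabs_le. lra. }
  assert (HTl : is_lim_seq T 0).
  { assert (H1 : is_lim_seq (sum_n b) (Series b)) by (apply Series_correct; auto).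
    pose proof (is_lim_seq_minus' _ _ _ _ (is_lim_seq_const (Series b)) H1) as H2.
    replace (Series b - Series b) with 0 in H2 by ring. exact H2. }
  assert (HL : is_lim_seq (sum_n (fun k => f k * z ^ k * J p q k eps)) I).
  { apply (is_lim_seq_le_le (fun n => I - T n * J0) _ (fun n => I + T n * J0)).
    - intros n. pose proof (Hbnd n) as Hn. apply Rabs_le_between in Hn. lra.
    - pose proof (is_lim_seq_minus' _ _ _ _ (is_lim_seq_const I) (is_lim_seq_scal_r T J0 0 HTl)) as H.
      simpl in H. rewrite Rmult_0_l, Rminus_0_r in H. exact H.
    - pose proof (is_lim_seq_plus' _ _ _ _ (is_lim_seq_const I) (is_lim_seq_scal_r T J0 0 HTl)) as H.
      simpl in H. rewrite Rmult_0_l, Rplus_0_r in H. exact H. }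
  exact HL.
Qed.

Lemma INR_le_pow2 k : INR k <= 2 ^ k.
Proof.
  assert (H : INR k <= 2 ^ k /\ 1 <= 2 ^ k).
  { induction k as [|k [IH1 IH2]]; [simpl; lra|]. rewrite S_INR. simpl pow. lra. }
  tauto.
Qed.

Lemma halfw_cont p q t : 0 < t < 1 -> continuous (fun t => / 2 * w p q t) t.
Proof. intros Ht. apply (@ex_derive_continuous R_AbsRing R_NormedModule). unfold w. auto_derive. lra. Qed.

Lemma key f p q : good_conv f -> f 0%nat = 1 -> (forall u, u <= 0 -> 0 <= PSeries f u) ->
  0 < p -> 0 < q -> forall z, z < 0 -> 0 < PSeries (fun k => f k * rr p q k) z.
Proof.
  intros Hf H0 Hpos Hp Hq z Hz.
  pose proof (PSeries_continuity f 0 (good_radius f Hf 0)) as Hc.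
  unfold continuity_pt, continue_in, limit1_in, limit_in in Hc. simpl in Hc.
  unfold R_dist, D_x, no_cond in Hc.
  destruct (Hc (1/2) ltac:(lra)) as [del [Hdel Hdel2]].
  rewrite PSeries_0, H0 in Hdel2.
  assert (Hnear : forall u, Rabs u < del -> 1/2 <= PSeries f u).
  { intros u Hu. destruct (Req_dec u 0) as [->|Hu0].
    - rewrite PSeries_0, H0. lra.
    - assert (Hh : Rabs (PSeries f u - 1) < 1/2).
      { apply Hdel2. split; [split; auto|]. rewrite Rminus_0_r. auto. }
      apply Rabs_def2 in Hh. lra. }
  set (eta := Rmin (1/2) (del / (2 * (Rabs z + 1)))).
  assert (Heta : 0 < eta <= 1/2).
  { unfold eta. split; [|apply Rmin_l]. apply Rmin_glb_lt; [lra|].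
    apply Rdiv_lt_0_compat; [lra|]. pose proof (Rabs_pos z); lra. }
  assert (HFeta : forall t, 0 <= t <= eta -> 1/2 <= PSeries f (z * t)).
  { intros t Ht. apply Hnear. rewrite Rabs_mult, (Rabs_right t) by lra.
    assert (t <= del / (2 * (Rabs z + 1))) by (apply Rle_trans with eta; [lra|apply Rmin_r]).
    pose proof (Rabs_pos z).
    apply Rle_lt_trans with (Rabs z * (del / (2 * (Rabs z + 1)))).
    - apply Rmult_le_compat_l; lra.
    - apply Rmult_lt_reg_r with (2 * (Rabs z + 1)); [lra|].
      field_simplify; [|lra]. nra. }
  set (L := RInt (fun t => / 2 * w p q t) (eta / 2) eta).
  assert (HL : 0 < L).
  { apply RInt_gt_0; [lra| |].
    - intros; pose proof (w_pos p q x). lra.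
    - intros x Hx. apply halfw_cont. lra. }
  assert (Hb2 : ex_series (fun k => Rabs (f k * (2 * z) ^ k))) by apply Hf.
  set (A2 := Series (fun k => Rabs (f k * (2 * z) ^ k))).
  assert (HA2 : 0 <= A2) by (apply Series_nonneg; auto; intros; apply Rabs_pos).
  set (tau := L * (p + q) / (2 * (A2 + 1))).
  assert (Htau : 0 < tau) by (unfold tau; apply Rdiv_lt_0_compat; nra).
  set (M := Rmax (Rmax 1 (- ln (eta / 2))) (Rmax (- ln (tau / 2) / p) (- ln (tau / 2) / q))).
  set (eps := exp (- M)).
  assert (HM1 : 1 <= M) by (unfold M; eapply Rle_trans; [apply Rmax_l|apply Rmax_l]).
  assert (HM2 : - ln (eta / 2) <= M) by (unfold M; eapply Rle_trans; [apply Rmax_r|apply Rmax_l]).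
  assert (HM3 : - ln (tau / 2) / p <= M) by (unfold M; eapply Rle_trans; [apply Rmax_l|apply Rmax_r]).
  assert (HM4 : - ln (tau / 2) / q <= M) by (unfold M; eapply Rle_trans; [apply Rmax_r|apply Rmax_r]).
  assert (Heps0 : 0 < eps) by apply exp_pos.
  assert (Hepsle : eps <= eta / 2).
  { unfold eps. rewrite <- (exp_ln (eta/2)) by lra. apply exp_le'. lra. }
  assert (He : 0 < eps < 1/2) by lra.
  assert (Hlneps : ln eps = - M) by (unfold eps; apply ln_exp).
  assert (Hbeta : exp (p * ln eps) + exp (q * ln eps) <= tau).
  { rewrite Hlneps.
    assert (exp (p * - M) <= tau / 2).
    { rewrite <- (exp_ln (tau/2)) by lra. apply exp_le'.
      apply Rmult_le_compat_l with (r := p) in HM3; [|lra].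
      unfold Rdiv in HM3. rewrite <- Rmult_assoc, (Rmult_comm p), Rmult_assoc, Rinv_r, Rmult_1_r in HM3 by lra.
      lra. }
    assert (exp (q * - M) <= tau / 2).
    { rewrite <- (exp_ln (tau/2)) by lra. apply exp_le'.
      apply Rmult_le_compat_l with (r := q) in HM4; [|lra].
      unfold Rdiv in HM4. rewrite <- Rmult_assoc, (Rmult_comm q), Rmult_assoc, Rinv_r, Rmult_1_r in HM4 by lra.
      lra. }
    lra. }
  set (G := fun t => PSeries f (z * t) * w p q t).
  set (I := RInt G eps (1 - eps)).
  assert (HGnn : forall t, 0 < t < 1 -> 0 <= G t).
  { intros t Ht. unfold G. apply Rmult_le_pos; [|left; apply w_pos].
    apply Hpos. nra. }
  assert (HexG : forall a b, 0 < a < 1 -> 0 < b < 1 -> ex_RInt G a b).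
  { intros a b Ha Hb. apply (@ex_RInt_continuous R_CompleteNormedModule). intros y Hy.
    apply G_cont; auto. split.
    - eapply Rlt_le_trans; [|apply Hy]. apply Rmin_glb_lt; lra.
    - eapply Rle_lt_trans; [apply Hy|]. apply Rmax_lub_lt; lra. }
  assert (HIL : L <= I).
  { unfold I.
    rewrite <- (@RInt_Chasles R_CompleteNormedModule G eps (eta/2) (1 - eps)) by (apply HexG; lra).
    rewrite <- (@RInt_Chasles R_CompleteNormedModule G (eta/2) eta (1 - eps)) by (apply HexG; lra).
    unfold plus; simpl.
    assert (0 <= RInt G eps (eta / 2)).
    { apply RInt_ge_0; [lra|apply HexG; lra|]. intros; apply HGnn; lra. }
    assert (0 <= RInt G eta (1 - eps)).
    { apply RInt_ge_0; [lra|apply HexG; lra|]. intros; apply HGnn; lra. }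
    assert (L <= RInt G (eta / 2) eta).
    { apply RInt_le; [lra| | apply HexG; lra |].
      - apply (@ex_RInt_continuous R_CompleteNormedModule). intros y Hy.
        apply halfw_cont. split.
        + eapply Rlt_le_trans; [|apply Hy]. apply Rmin_glb_lt; lra.
        + eapply Rle_lt_trans; [apply Hy|]. apply Rmax_lub_lt; lra.
      - intros t Ht. unfold G. pose proof (w_pos p q t). pose proof (HFeta t ltac:(lra)). nra. }
    lra. }
  pose proof (interchange f p q z eps Hf He) as HS.
  apply is_series_unique in HS. fold G I in HS.
  set (J0 := J p q 0 eps).
  set (D := fun k => J p q k eps - rr p q k * J0).
  set (Psi := PSeries (fun k => f k * rr p q k) z).
  assert (Hex1 : ex_series (fun k => f k * rr p q k * z ^ k)).
  { apply ex_series_Rabs. apply (@ex_series_le R_AbsRing R_CompleteNormedModule _ (fun k => Rabs (f k * z ^ k))); [|apply Hf].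
    intros k. unfold norm; simpl; unfold abs; simpl. rewrite Rabs_Rabsolu, !Rabs_mult.
    pose proof (rr_bound p q k Hp ltac:(lra)). rewrite (Rabs_right (rr p q k)) by lra.
    replace (Rabs (f k) * rr p q k * Rabs (z ^ k)) with (rr p q k * (Rabs (f k) * Rabs (z ^ k))) by ring.
    assert (0 <= Rabs (f k) * Rabs (z ^ k)) by (apply Rmult_le_pos; apply Rabs_pos). nra. }
  set (beta := exp (p * ln eps) + exp (q * ln eps)).
  assert (Hbeta0 : 0 <= beta) by (unfold beta; pose proof (exp_pos (p * ln eps)); pose proof (exp_pos (q * ln eps)); lra).
  assert (HEt : forall k, Rabs (f k * z ^ k * D k) <= Rabs (f k * (2 * z) ^ k) * (beta / (p + q))).
  { intros k. pose proof (D_bound p q k eps Hp Hq He) as Hd. fold J0 beta in Hd. fold (D k) in Hd.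
    rewrite Rabs_mult.
    replace (Rabs (f k * (2 * z) ^ k)) with (2 ^ k * Rabs (f k * z ^ k))
      by (rewrite Rpow_mult_distr, !Rabs_mult, (Rabs_right (2 ^ k)); [ring| left; apply pow_lt; lra]).
    pose proof (INR_le_pow2 k). pose proof (Rabs_pos (f k * z ^ k)).
    apply Rle_trans with (Rabs (f k * z ^ k) * (INR k * beta / (p + q))).
    - apply Rmult_le_compat_l; auto.
    - unfold Rdiv. assert (HX : 0 <= beta * / (p + q)) by (apply Rmult_le_pos; [lra|left; apply Rinv_0_lt_compat; lra]).
      set (X := beta * / (p + q)) in *.
      replace (INR k * beta * / (p + q)) with (INR k * X) by (unfold X; ring).
      assert (0 <= Rabs (f k * z ^ k) * X) by (apply Rmult_le_pos; auto).
      replace (Rabs (f k * z ^ k) * (INR k * X)) with (INR k * (Rabs (f k * z ^ k) * X)) by ring.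
      replace (2 ^ k * Rabs (f k * z ^ k) * X) with (2 ^ k * (Rabs (f k * z ^ k) * X)) by ring.
      apply Rmult_le_compat_r; auto. }
  assert (HexE : ex_series (fun k => f k * z ^ k * D k)).
  { apply ex_series_Rabs. apply (@ex_series_le R_AbsRing R_CompleteNormedModule _ (fun k => Rabs (f k * (2 * z) ^ k) * (beta / (p + q)))).
    - intros k. unfold norm; simpl; unfold abs; simpl. rewrite Rabs_Rabsolu. apply HEt.
    - apply ex_series_scal_r. auto. }
  assert (HEb : Rabs (Series (fun k => f k * z ^ k * D k)) <= A2 * (beta / (p + q))).
  { eapply Rle_trans; [apply Series_Rabs|].
    - apply (@ex_series_le R_AbsRing R_CompleteNormedModule _ (fun k => Rabs (f k * (2 * z) ^ k) * (beta / (p + q)))).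
      + intros k. unfold norm; simpl; unfold abs; simpl. rewrite Rabs_Rabsolu. apply HEt.
      + apply ex_series_scal_r. auto.
    - unfold A2. rewrite <- Series_scal_r. apply Series_le.
      + intros k; split; [apply Rabs_pos| apply HEt].
      + apply ex_series_scal_r. auto. }
  assert (Hsplit : I = Psi * J0 + Series (fun k => f k * z ^ k * D k)).
  { rewrite <- HS. unfold Psi, PSeries. rewrite <- Series_scal_r.
    rewrite <- Series_plus; [| apply ex_series_scal_r; auto | auto].
    apply Series_ext. intros k. unfold D. ring. }
  assert (HJ0 : 0 <= J0).
  { unfold J0, J. apply RInt_ge_0; [lra| apply mon_ex; auto |]. intros t _. simpl. rewrite Rmult_1_l. left; apply w_pos. }
  assert (HEsmall : A2 * (beta / (p + q)) < L / 2 + L / 2 * 0 + 0 + L / 2 - L / 2 + 0).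
  { apply Rle_lt_trans with (A2 * (tau / (p + q))).
    - apply Rmult_le_compat_l; auto. unfold Rdiv. apply Rmult_le_compat_r; [left; apply Rinv_0_lt_compat; lra| auto].
    - unfold tau. replace (A2 * (L * (p + q) / (2 * (A2 + 1)) / (p + q))) with ((L / 2) * (A2 / (A2 + 1))) by (field; lra).
      assert (A2 / (A2 + 1) < 1).
      { apply Rmult_lt_reg_r with (A2 + 1); [lra|]. unfold Rdiv. rewrite Rmult_assoc, Rinv_l by lra. lra. }
      nra. }
  apply Rabs_le_between in HEb.
  assert (0 < Psi * J0) by lra.
  destruct (Rle_or_lt Psi 0) as [Hn|Hn]; [|exact Hn].
  assert (Psi * J0 <= 0) by nra. lra.
Qed.

Definition good (f : nat -> R) :=
  good_conv f /\ f 0%nat = 1 /\ (forall u, u <= 0 -> 0 <= PSeries f u).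
Definition strict (f : nat -> R) := forall z, z < 0 -> 0 < PSeries f z.

Lemma transform f p P q : good f -> 0 < p -> 0 <= q -> P = p + q ->
  good (fun k => f k * (poch p k / poch P k)) /\
  ((0 < q \/ strict f) -> strict (fun k => f k * (poch p k / poch P k))).
Proof.
  intros [Hf [H0 Hpos]] Hp Hq ->.
  change (fun k => f k * (poch p k / poch (p + q) k)) with (fun k => f k * rr p q k).
  assert (Hc : good_conv (fun k => f k * rr p q k)).
  { intros x. apply (@ex_series_le R_AbsRing R_CompleteNormedModule _ (fun k => Rabs (f k * x ^ k))); [|apply Hf].
    intros k. unfold norm; simpl; unfold abs; simpl. rewrite Rabs_Rabsolu, !Rabs_mult.
    pose proof (rr_bound p q k Hp Hq). rewrite (Rabs_right (rr p q k)) by lra.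
    replace (Rabs (f k) * rr p q k * Rabs (x ^ k)) with (rr p q k * (Rabs (f k) * Rabs (x ^ k))) by ring.
    assert (0 <= Rabs (f k) * Rabs (x ^ k)) by (apply Rmult_le_pos; apply Rabs_pos). nra. }
  assert (Hg0 : f 0%nat * rr p q 0 = 1) by (rewrite rr_0, H0; ring).
  destruct (Req_dec q 0) as [Hq0|Hq0].
  - subst q. assert (E : forall u, PSeries (fun k => f k * rr p 0 k) u = PSeries f u).
    { intros u. unfold PSeries. apply Series_ext. intros k. unfold rr. rewrite Rplus_0_r.
      pose proof (poch_pos p k Hp). field. lra. }
    split.
    + split; [auto| split; auto]. intros u Hu. rewrite E. auto.
    + intros [H|H]; [lra|]. intros z Hz. rewrite E. auto.
  - assert (Hq' : 0 < q) by lra.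
    pose proof (key f p q Hf H0 Hpos Hp Hq') as K.
    split.
    + split; [auto| split; auto]. intros u [Hu|Hu]; [left; apply K; auto|].
      subst u. rewrite PSeries_0, Hg0. lra.
    + intros _. exact K.
Qed.

Definition f0 (a b c : R) (k : nat) := poch a k / (INR (fact k) * poch b k * poch c k).

Lemma f0_bound a b c k : 0 < a -> 0 < b -> 0 < c ->
  0 < f0 a b c k <= ((a / b + 1) / c) ^ k / INR (fact k).
Proof.
  intros Ha Hb Hc. set (K := (a / b + 1) / c).
  assert (HK : 0 < K) by (unfold K; apply Rdiv_lt_0_compat; [|lra]; pose proof (Rdiv_lt_0_compat a b Ha Hb); lra).
  induction k as [|k [IH1 IH2]].
  - unfold f0; simpl. lra.
  - pose proof (pos_INR k) as Hk.
    pose proof (INR_fact_lt_0 k) as Hf.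
    pose proof (poch_pos a k Ha). pose proof (poch_pos b k Hb). pose proof (poch_pos c k Hc).
    assert (E : f0 a b c (S k) = f0 a b c k * ((a + INR k) / ((INR k + 1) * (b + INR k) * (c + INR k)))).
    { unfold f0. simpl poch. rewrite fact_simpl, mult_INR, S_INR. field. repeat split; lra. }
    assert (Hr : 0 < (a + INR k) / ((INR k + 1) * (b + INR k) * (c + INR k))).
    { apply Rdiv_lt_0_compat; [lra|]. repeat apply Rmult_lt_0_compat; lra. }
    assert (Hr2 : (a + INR k) / ((INR k + 1) * (b + INR k) * (c + INR k)) <= K / (INR k + 1)).
    { assert (X1 : (a + INR k) / (b + INR k) <= a / b + 1).
      { apply Rmult_le_reg_r with (b + INR k); [lra|]. unfold Rdiv at 1.
        rewrite Rmult_assoc, Rinv_l, Rmult_1_r by lra.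
        assert (0 <= a / b * INR k) by (apply Rmult_le_pos; [left; apply Rdiv_lt_0_compat|]; lra).
        replace ((a / b + 1) * (b + INR k)) with (a + a / b * INR k + b + INR k) by (field; lra). lra. }
      assert (X2 : / (c + INR k) <= / c) by (apply Rinv_le_contravar; lra).
      assert (X3 : 0 < (a + INR k) / (b + INR k)) by (apply Rdiv_lt_0_compat; lra).
      assert (X4 : 0 < / (c + INR k)) by (apply Rinv_0_lt_compat; lra).
      assert (X5 : 0 < / (INR k + 1)) by (apply Rinv_0_lt_compat; lra).
      replace ((a + INR k) / ((INR k + 1) * (b + INR k) * (c + INR k)))
        with ((a + INR k) / (b + INR k) * / (c + INR k) * / (INR k + 1)) by (field; repeat split; lra).
      unfold K. replace ((a / b + 1) / c / (INR k + 1)) with ((a / b + 1) * / c * / (INR k + 1)) by (field; lra).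
      apply Rmult_le_compat_r; [lra|]. apply Rmult_le_compat; lra. }
    rewrite E. split; [apply Rmult_lt_0_compat; auto|].
    apply Rle_trans with ((K ^ k / INR (fact k)) * (K / (INR k + 1))).
    + apply Rmult_le_compat; lra.
    + rewrite fact_simpl, mult_INR, S_INR. simpl pow. right. field. lra.
Qed.

Lemma exp_series_ex y : ex_series (fun n => y ^ n / INR (fact n)).
Proof.
  exists (exp y). pose proof (is_exp_Reals y) as H. unfold is_pseries in H.
  eapply (@is_series_ext R_AbsRing R_NormedModule); [|exact H].
  intros n. unfold scal; simpl; unfold mult; simpl. rewrite pow_n_pow. reflexivity.
Qed.

Lemma f0_good a b c : 0 < a -> 0 < b -> 0 < c ->
  (forall x : R, 0 <= F12 a b c (- x ^ 2 / 4)) -> good (f0 a b c).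
Proof.
  intros Ha Hb Hc HP. split; [|split].
  - intros x. set (K := (a / b + 1) / c).
    apply (@ex_series_le R_AbsRing R_CompleteNormedModule _ (fun n => (K * Rabs x) ^ n / INR (fact n))); [|apply exp_series_ex].
    intros k. unfold norm; simpl; unfold abs; simpl. rewrite Rabs_Rabsolu, Rabs_mult, <- RPow_abs.
    pose proof (f0_bound a b c k Ha Hb Hc) as [H1 H2]. fold K in H2.
    rewrite (Rabs_right (f0 a b c k)) by lra. rewrite Rpow_mult_distr.
    unfold Rdiv in *. pose proof (pow_le (Rabs x) k (Rabs_pos x)).
    replace (K ^ k * Rabs x ^ k * / INR (fact k)) with (K ^ k * / INR (fact k) * Rabs x ^ k) by ring.
    apply Rmult_le_compat_r; auto.
  - unfold f0; simpl. field.
  - intros u Hu. pose proof (HP (2 * sqrt (- u))) as H.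
    replace (- (2 * sqrt (- u)) ^ 2 / 4) with u in H.
    + unfold F12, F12_term in H. exact H.
    + simpl. rewrite Rmult_1_r. replace (2 * sqrt (- u) * (2 * sqrt (- u))) with (4 * (sqrt (-u) * sqrt (-u))) by ring.
      rewrite sqrt_sqrt by lra. field.
Qed.

Theorem lemma1 (a b c : R) (ha : 0 < a) (hb : 0 < b) (hc : 0 < c)
  (hPhi : forall x : R, 0 <= F12 a b c (- x ^ 2 / 4))
  (g d e : R) (hg0 : 0 <= g) (hga : g < a) (hd : 0 <= d) (he : 0 <= e)
  (hnz : ~ (g = 0 /\ d = 0 /\ e = 0)) :
  P12 (a - g) (b + d) (c + e).
Proof.
  pose proof (f0_good a b c ha hb hc hPhi) as G0.
  destruct (transform (f0 a b c) (a - g) a g G0 ltac:(lra) hg0 ltac:(ring)) as [G1 S1].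
  destruct (transform _ b (b + d) d G1 hb hd eq_refl) as [G2 S2].
  destruct (transform _ c (c + e) e G2 hc he eq_refl) as [G3 S3].
  assert (Hs : strict (fun k => f0 a b c k * (poch (a - g) k / poch a k) * (poch b k / poch (b + d) k) * (poch c k / poch (c + e) k))).
  { apply S3. destruct (Req_dec e 0) as [He0|He0]; [right|left; lra].
    apply S2. destruct (Req_dec d 0) as [Hd0|Hd0]; [right|left; lra].
    apply S1. left. destruct (Req_dec g 0); [|lra]. exfalso; apply hnz; auto. }
  split; [lra|split; [lra|split; [lra|]]].
  intros x Hx.
  assert (Hz : - x ^ 2 / 4 < 0) by (simpl; nra).
  pose proof (Hs _ Hz) as H.
  unfold F12, PSeries in *.
  rewrite (Series_ext _ (fun k => f0 a b c k * (poch (a - g) k / poch a k) * (poch b k / poch (b + d) k) * (poch c k / poch (c + e) k) * (- x ^ 2 / 4) ^ k)); [exact H|].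
  intros k. unfold F12_term, f0.
  pose proof (poch_pos a k ha). pose proof (poch_pos b k hb). pose proof (poch_pos c k hc).
  pose proof (poch_pos (a - g) k ltac:(lra)). pose proof (poch_pos (b + d) k ltac:(lra)). pose proof (poch_pos (c + e) k ltac:(lra)).
  pose proof (INR_fact_lt_0 k).
  field. repeat split; lra.
Qed.
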